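(* Let $\omega_1\ne\omega_2$ be real, let $a$ be a real polynomial of degree $N-1\ge1$, and let $q_1,q_2,C_1,C_2\in\mathbb C$ satisfy, for all $t\in\mathbb R$, $$e^{-i\omega_1t}C_1+e^{-i\omega_2t}C_2=a\big(|q_1e^{-i\omega_1t}+q_2e^{-i\omega_2t}|^2\big)\big(q_1e^{-i\omega_1t}+q_2e^{-i\omega_2t}\big).$$ Then $q_1=0$ or $q_2=0$. *)

(* Defs.v *)
From Stdlib Require Import Reals.
Open Scope R_scope.

Definition Cplx : Type := (R * R)%type.
Definition Cadd (z w : Cplx) : Cplx := (fst z + fst w, snd z + snd w).
Definition Cmul (z w : Cplx) : Cplx :=
  (fst z * fst w - snd z * snd w, fst z * snd w + snd z * fst w).
Definition RtoC (x : R) : Cplx := (x, 0).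
Definition Cnorm2 (z : Cplx) : R := fst z * fst z + snd z * snd z.
Definition Cexpi (theta : R) : Cplx := (cos theta, sin theta).

Definition polyR (c : nat -> R) (d : nat) (x : R) : R :=
  sum_f_R0 (fun k => c k * x ^ k) d.

(* Main.v *)
Require Import Defs.
From Stdlib Require Import Reals Lra Psatz.
Open Scope R_scope.

Lemma circle cs sn : cs * cs + sn * sn = 1 -> exists th, cos th = cs /\ sin th = sn.
Proof.
intros Hu.
assert (Hb : -1 <= cs <= 1) by nra.
assert (Hq : sqrt (1 - cs²) = Rabs sn).
{ replace (1 - cs²) with (sn²) by (unfold Rsqr; lra). apply sqrt_Rsqr_abs. }
destruct (Rle_dec 0 sn) as [Hs|Hs].
{ exists (acos cs). split.
  { apply cos_acos; auto. }
  rewrite sin_acos by auto. rewrite Hq. apply Rabs_right; lra. }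
{ exists (- acos cs). rewrite cos_neg, sin_neg. split.
  { apply cos_acos; auto. }
  rewrite sin_acos by auto. rewrite Hq. rewrite Rabs_left; lra. }
Qed.

Lemma reduce (w1 w2 : R) (c : nat -> R) (d : nat) a1 b1 a2 b2 e1 f1 e2 f2 :
  w1 <> w2 ->
  (forall t : R,
     let u := Cadd (Cmul (a1,b1) (Cexpi (- (w1 * t)))) (Cmul (a2,b2) (Cexpi (- (w2 * t)))) in
     Cadd (Cmul (Cexpi (- (w1 * t))) (e1,f1)) (Cmul (Cexpi (- (w2 * t))) (e2,f2))
     = Cmul (RtoC (polyR c d (Cnorm2 u))) u) ->
  forall cs sn, cs * cs + sn * sn = 1 ->
  let G := polyR c d (a1*a1+b1*b1+a2*a2+b2*b2 + 2*(cs*(a1*a2+b1*b2) + sn*(b1*a2-a1*b2))) in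
  e1 + (cs*e2 - sn*f2) = G * (a1 + cs*a2 - sn*b2) /\
  f1 + (cs*f2 + sn*e2) = G * (b1 + cs*b2 + sn*a2).
Proof.
intros Hw H cs sn Hu G.
destruct (circle cs sn Hu) as [ph [Hc Hs]].
set (t := - ph / (w2 - w1)).
specialize (H t). simpl in H.
unfold Cadd, Cmul, Cexpi, RtoC, Cnorm2 in H; simpl in H.
replace (-(w2*t)) with (-(w1*t) + ph) in H by (unfold t; field; lra).
rewrite cos_plus, sin_plus, Hc, Hs in H.
set (ca := cos (-(w1*t))) in H. set (sa := sin (-(w1*t))) in H.
assert (Hp : ca * ca + sa * sa = 1) by (pose proof (sin2_cos2 (-(w1*t))); unfold Rsqr in *; fold ca sa in H0; lra).
match type of H with context [polyR c d ?X] =>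
  assert (HX : X = a1*a1+b1*b1+a2*a2+b2*b2 + 2*(cs*(a1*a2+b1*b2) + sn*(b1*a2-a1*b2))) end.
{ transitivity ((ca*ca+sa*sa)*((a1 + a2*cs - b2*sn)*(a1 + a2*cs - b2*sn) + (b1 + a2*sn + b2*cs)*(b1 + a2*sn + b2*cs))).
  { ring. }
  rewrite Hp.
  transitivity (a1*a1+b1*b1+(cs*cs+sn*sn)*(a2*a2+b2*b2) + 2*(cs*(a1*a2+b1*b2) + sn*(b1*a2-a1*b2))).
  { ring. }
  rewrite Hu; ring. }
rewrite HX in H.
fold G in H.
injection H as H1 H2.
match type of H1 with ?L1 = _ => match type of H2 with ?L2 = _ =>
split; (apply (Rmult_eq_reg_l (ca*ca+sa*sa)); [| lra]);
[ transitivity (ca*L1 + sa*L2) | transitivity (ca*L2 - sa*L1) ]; try ring; rewrite H1, H2; ring end end.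
Qed.


Lemma two_pts c d a1 b1 a2 b2 e1 f1 e2 f2 :
  (forall cs sn, cs * cs + sn * sn = 1 ->
  let G := polyR c d (a1*a1+b1*b1+a2*a2+b2*b2 + 2*(cs*(a1*a2+b1*b2) + sn*(b1*a2-a1*b2))) in
  e1 + (cs*e2 - sn*f2) = G * (a1 + cs*a2 - sn*b2) /\
  f1 + (cs*f2 + sn*e2) = G * (b1 + cs*b2 + sn*a2)) ->
  forall cs sn cs' sn', cs * cs + sn * sn = 1 -> cs' * cs' + sn' * sn' = 1 ->
  cs*(a1*a2+b1*b2) + sn*(b1*a2-a1*b2) = cs'*(a1*a2+b1*b2) + sn'*(b1*a2-a1*b2) ->
  0 < (cs - cs') * (cs - cs') + (sn - sn') * (sn - sn') ->
  polyR c d (a1*a1+b1*b1+a2*a2+b2*b2 + 2*(cs*(a1*a2+b1*b2) + sn*(b1*a2-a1*b2))) * (a2*a2+b2*b2)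
  = e2*a2+f2*b2.
Proof.
intros HR cs sn cs' sn' Hu Hu' Hx Hd.
destruct (HR cs sn Hu) as [A1 A2].
destruct (HR cs' sn' Hu') as [B1 B2].
rewrite <- Hx in B1, B2.
set (G := polyR c d (a1*a1+b1*b1+a2*a2+b2*b2 + 2*(cs*(a1*a2+b1*b2) + sn*(b1*a2-a1*b2)))) in *.
set (d1 := cs - cs') in *. set (d2 := sn - sn') in *.
set (D1 := e2 - G*a2). set (D2 := f2 - G*b2).
assert (E1 : d1 * D1 - d2 * D2 = 0) by (unfold d1, d2, D1, D2; lra).
assert (E2 : d1 * D2 + d2 * D1 = 0) by (unfold d1, d2, D1, D2; lra).
assert (F1 : (d1*d1+d2*d2) * D1 = 0).
{ transitivity (d1*(d1 * D1 - d2 * D2) + d2*(d1 * D2 + d2 * D1)); [ring|]. rewrite E1, E2; ring. }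
assert (F2 : (d1*d1+d2*d2) * D2 = 0).
{ transitivity (d1*(d1 * D2 + d2 * D1) - d2*(d1 * D1 - d2 * D2)); [ring|]. rewrite E1, E2; ring. }
apply Rmult_integral in F1. apply Rmult_integral in F2.
destruct F1 as [F1|F1]; [lra|]. destruct F2 as [F2|F2]; [lra|].
unfold D1, D2 in *.
replace e2 with (G*a2) by lra. replace f2 with (G*b2) by lra. ring.
Qed.
Module PolyAux.
From mathcomp Require Import all_boot all_algebra.
From mathcomp Require Import Rstruct.
Import GRing.Theory.
Open Scope R_scope.

Lemma pow_expr (x : R) k : pow x k = GRing.exp x k.
Proof. elim: k => [|k IH] //=. by rewrite GRing.exprS IH. Qed.

Lemma polyR_horner c d x : polyR c d x = (\poly_(i < d.+1) c i).[x]%R.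
Proof.
rewrite horner_poly /polyR.
elim: d => [|d IH]; first by rewrite big_ord1 /=; rewrite GRing.expr0.

rewrite big_ord_recr /= -IH pow_expr GRing.exprS. done.
Qed.

Lemma INR_natr k : INR k = (k%:R)%R.
Proof. elim: k => [|k IH] //. rewrite S_INR IH GRing.mulrS. rewrite Rplus_comm. done. Qed.

Lemma poly_const_pts (c : nat -> R) d K A h :
  Peano.le 1 d -> h <> 0 ->
  (forall k, Peano.le k d -> polyR c d (A + h * INR k) = K) -> c d = 0.
Proof.
move=> /leP d1 h0 Hk'.
have Hk : forall k, (k <= d)%N -> polyR c d (A + h * INR k) = K.
  by move=> k /leP; apply: Hk'.
case: (Req_EM_T (c d) 0) => // cd0.
pose p := (\poly_(i < d.+1) c i - K%:P)%R.
have pd : (p`_d = c d)%R.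
  have dn0 : (d == 0)%N = false by case: (d) d1.
  by rewrite coefB coef_poly coefC ltnSn dn0 GRing.subr0.
have p0 : p != 0%R.
  apply/eqP => E; move: pd; rewrite E coef0 => /esym; exact: cd0.
pose rs := [seq (A + h * k%:R)%R | k <- iota 0 d.+1].
have := @max_poly_roots _ p rs p0.
have -> : all (root p) rs.
  apply/allP => x /mapP [k]; rewrite mem_iota add0n => /andP [_ kd] ->.
  rewrite /root /p hornerD hornerN hornerC -polyR_horner -INR_natr Hk //.
  by rewrite GRing.subrr.
have -> : uniq rs.
  rewrite map_inj_uniq ?iota_uniq //.
  move=> i j /=. rewrite -!INR_natr => E.
  apply: INR_eq. apply: (Rmult_eq_reg_l h) => //. exact: (Rplus_eq_reg_l A).
move=> /(_ isT isT).
have : (size p <= d.+1)%N.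
  rewrite /p. apply: (leq_trans (size_polyD _ _)). rewrite geq_max size_poly size_polyN size_polyC.
  by case: (K != 0%R).
rewrite size_map size_iota => H1 H2. by move: (leq_trans H2 H1); rewrite ltnn.
Qed.

End PolyAux.


Theorem mainTheorem3 (w1 w2 : R) (c : nat -> R) (d : nat)
  (q1 q2 C1 C2 : Cplx) :
  w1 <> w2 ->
  (1 <= d)%nat ->
  c d <> 0 ->
  (forall t : R,
     let u := Cadd (Cmul q1 (Cexpi (- (w1 * t)))) (Cmul q2 (Cexpi (- (w2 * t)))) in
     Cadd (Cmul (Cexpi (- (w1 * t))) C1) (Cmul (Cexpi (- (w2 * t))) C2)
     = Cmul (RtoC (polyR c d (Cnorm2 u))) u) ->
  q1 = (0, 0) \/ q2 = (0, 0).
Proof.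
intros Hw Hd Hcd H.
destruct q1 as [a1 b1], q2 as [a2 b2], C1 as [e1 f1], C2 as [e2 f2].
destruct (Req_dec (a1*a1+b1*b1) 0) as [Z1|Z1].
{ left. assert (a1 = 0) by nra. assert (b1 = 0) by nra. subst; reflexivity. }
destruct (Req_dec (a2*a2+b2*b2) 0) as [Z2|Z2].
{ right. assert (a2 = 0) by nra. assert (b2 = 0) by nra. subst; reflexivity. }
exfalso; apply Hcd.
pose proof (reduce w1 w2 c d a1 b1 a2 b2 e1 f1 e2 f2 Hw H) as HR.
assert (N1 : 0 < a1*a1+b1*b1) by nra.
assert (N2 : 0 < a2*a2+b2*b2) by nra.
assert (HPQ : (a1*a2+b1*b2)*(a1*a2+b1*b2)+(b1*a2-a1*b2)*(b1*a2-a1*b2) = (a1*a1+b1*b1)*(a2*a2+b2*b2)) by ring.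
assert (PQpos : 0 < (a1*a2+b1*b2)*(a1*a2+b1*b2)+(b1*a2-a1*b2)*(b1*a2-a1*b2)).
{ rewrite HPQ. apply Rmult_lt_0_compat; assumption. }
set (rho := sqrt ((a1*a2+b1*b2)*(a1*a2+b1*b2)+(b1*a2-a1*b2)*(b1*a2-a1*b2))).
assert (Hrho : rho * rho = (a1*a2+b1*b2)*(a1*a2+b1*b2)+(b1*a2-a1*b2)*(b1*a2-a1*b2)).
{ apply sqrt_sqrt; lra. }
assert (rpos : 0 < rho) by (apply sqrt_lt_R0; exact PQpos).
assert (Key : forall y, 0 <= y < 1 ->
  polyR c d (a1*a1+b1*b1+a2*a2+b2*b2 + 2*(y*rho)) * (a2*a2+b2*b2) = e2*a2+f2*b2).
{ intros y Hy.
  set (P := a1*a2+b1*b2) in *. set (Q := b1*a2-a1*b2) in *.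
  set (sg := sqrt (1 - y*y)).
  assert (Hsg : sg * sg = 1 - y*y) by (apply sqrt_sqrt; nra).
  assert (sgpos : 0 < sg) by (apply sqrt_lt_R0; nra).
  set (cs := (y*P - sg*Q)/rho). set (sn := (y*Q + sg*P)/rho).
  set (cs' := (y*P + sg*Q)/rho). set (sn' := (y*Q - sg*P)/rho).
  assert (U1 : cs*cs+sn*sn = 1).
  { transitivity ((y*y+sg*sg)*(P*P+Q*Q)/(rho*rho)). { unfold cs, sn; field; lra. }
    rewrite Hsg, Hrho. field. lra. }
  assert (U2 : cs'*cs'+sn'*sn' = 1).
  { transitivity ((y*y+sg*sg)*(P*P+Q*Q)/(rho*rho)). { unfold cs', sn'; field; lra. }
    rewrite Hsg, Hrho. field. lra. }
  assert (X1 : cs*P+sn*Q = y*rho).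
  { transitivity (y*(rho*rho)/rho). { rewrite Hrho. unfold cs, sn; field; lra. } field; lra. }
  assert (X2 : cs'*P+sn'*Q = y*rho).
  { transitivity (y*(rho*rho)/rho). { rewrite Hrho. unfold cs', sn'; field; lra. } field; lra. }
  assert (D : (cs - cs') * (cs - cs') + (sn - sn') * (sn - sn') = 4*(sg*sg)).
  { transitivity (4*(sg*sg)*(P*P+Q*Q)/(rho*rho)). { unfold cs, sn, cs', sn'; field; lra. }
    rewrite Hrho. field. lra. }
  rewrite <- X1.
  apply (two_pts c d a1 b1 a2 b2 e1 f1 e2 f2 HR cs sn cs' sn' U1 U2).
  - unfold P, Q in X1, X2. rewrite X1, X2. reflexivity.
  - rewrite D. nra. }
apply (PolyAux.poly_const_pts c d ((e2*a2+f2*b2)/(a2*a2+b2*b2)) (a1*a1+b1*b1+a2*a2+b2*b2) (2*rho/(INR d + 1))).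
- exact Hd.
- assert (0 < INR d + 1) by (pose proof (pos_INR d); lra).
  apply Rgt_not_eq. apply Rdiv_lt_0_compat; lra.
- intros k Hk.
  assert (Hd1 : 0 < INR d + 1) by (pose proof (pos_INR d); lra).
  assert (Hkd : INR k <= INR d) by (apply le_INR; exact Hk).
  pose proof (pos_INR k).
  assert (Hy : 0 <= INR k / (INR d + 1) < 1).
  { split. { unfold Rdiv. apply Rmult_le_pos; [lra|]. left. apply Rinv_0_lt_compat; lra. } apply (Rmult_lt_reg_r (INR d + 1)); [lra|]. field_simplify; lra. }
  pose proof (Key _ Hy) as K1.
  replace (a1*a1+b1*b1+a2*a2+b2*b2 + 2*rho/(INR d + 1) * INR k)
    with (a1*a1+b1*b1+a2*a2+b2*b2 + 2*(INR k / (INR d + 1)*rho)) by (field; lra).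
  rewrite <- K1. field. lra.
Qed.
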